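(* In the setting of the context, assume in addition that there is $\mathcal{R}>0$ with $\nabla m(x)=0$ whenever $\|x\|\ge\mathcal{R}$. Then with $M=\frac34$ and $R=8L\mathcal{R}$, for all $x,y\in\mathbb{H}$ with $\|x-y\|_\alpha\ge R$, $$\mathbf{1}_{x^l\ne y^l}\Big\langle\frac{x^l-y^l}{\|x^l-y^l\|},b(x)-b(y)\Big\rangle+\mathbf{1}_{x^h\ne y^h}\,\alpha\Big\langle\frac{x^h-y^h}{\|x^h-y^h\|},b(x)-b(y)\Big\rangle\le M\|x-y\|_\alpha .$$
   Context: Let $(\mathbb{H},\langle\cdot,\cdot\rangle,\|\cdot\|)$ be a separable real Hilbert space and $\mathcal{G}$ a trace-class, symmetric, positive definite operator on $\mathbb{H}$. Let $(e_k)_{k\ge1}$ be an orthonormal basis with $\mathcal{G}e_k=\lambda_ke_k$, where $\lambda_k>0$, $\lambda_k\downarrow0$, $\lambda_1=1$, $\sum_k\lambda_k<\infty$. Let $U(x)=\frac a2\|x\|^2+m(x)$ with $a\ge0$, where $m:\mathbb{H}\to\mathbb{R}$ is bounded from below and Fréchet differentiable with $\|\nabla m(x)-\nabla m(y)\|\le L\|x-y\|$ for all $x,y$, for some $L\ge1$. Set $b(x)=-\mathcal{G}\nabla U(x)$. Let $n=\min\{k\in\mathbb{N}_+:\lambda_{k+1}<\frac{1}{2L}\}$, $\mathbb{H}^l=\mathrm{span}\{e_1,\dots,e_n\}$, $\mathbb{H}^h$ its orthogonal complement, $x^l,x^h$ the orthogonal projections, $\alpha=2(1+L)$ and $\|x\|_\alpha=\|x^l\|+\alpha\|x^h\|$.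 *)

(* Defs.v *)
From Stdlib Require Import Reals Lra Classical ClassicalEpsilon.
Open Scope R_scope.

Record HilbertSpace := {
  hcar :> Type;
  hzero : hcar;
  hadd : hcar -> hcar -> hcar;
  hscal : R -> hcar -> hcar;
  hinner : hcar -> hcar -> R;
  hadd_assoc : forall x y z, hadd x (hadd y z) = hadd (hadd x y) z;
  hadd_comm : forall x y, hadd x y = hadd y x;
  hadd_zero : forall x, hadd hzero x = x;
  hadd_opp : forall x, hadd x (hscal (-1) x) = hzero;
  hscal_one : forall x, hscal 1 x = x;
  hscal_assoc : forall a b x, hscal a (hscal b x) = hscal (a * b) x;
  hscal_distr_l : forall a x y, hscal a (hadd x y) = hadd (hscal a x) (hscal a y);
  hscal_distr_r : forall a b x, hscal (a + b) x = hadd (hscal a x) (hscal b x);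
  hinner_sym : forall x y, hinner x y = hinner y x;
  hinner_add : forall x y z, hinner (hadd x y) z = hinner x z + hinner y z;
  hinner_scal : forall a x y, hinner (hscal a x) y = a * hinner x y;
  hinner_pos : forall x, 0 <= hinner x x;
  hinner_def : forall x, hinner x x = 0 -> x = hzero;
  hcomplete : forall u : nat -> hcar,
    (forall eps, eps > 0 -> exists N, forall p q, (p >= N)%nat -> (q >= N)%nat ->
        sqrt (hinner (hadd (u p) (hscal (-1) (u q))) (hadd (u p) (hscal (-1) (u q)))) < eps) ->
    exists l, forall eps, eps > 0 -> exists N, forall p, (p >= N)%nat ->
        sqrt (hinner (hadd (u p) (hscal (-1) l)) (hadd (u p) (hscal (-1) l))) < eps
}.

Section Ops.
Variable H : HilbertSpace.

Definition hsub (x y : H) : H := hadd H x (hscal H (-1) y).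
Definition hnorm (x : H) : R := sqrt (hinner H x x).

Fixpoint hsumN (f : nat -> H) (N : nat) : H :=
  match N with
  | O => hzero H
  | S N' => hadd H (hsumN f N') (f N')
  end.

Definition hconverges (u : nat -> H) (l : H) : Prop :=
  forall eps, eps > 0 -> exists N, forall p, (p >= N)%nat -> hnorm (hsub (u p) l) < eps.

(** (e_k) (indexed from 0 here, e k = e_{k+1} of the paper) is an orthonormal basis *)
Definition orthonormal_basis (e : nat -> H) : Prop :=
  (forall i j, hinner H (e i) (e j) = if Nat.eq_dec i j then 1 else 0) /\
  (forall x, hconverges (fun N => hsumN (fun k => hscal H (hinner H x (e k)) (e k)) N) x).

(** Frechet differentiability of f with gradient g (Riesz representer of the derivative) *)
Definition frechet_gradient (f : H -> R) (g : H -> H) : Prop :=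
  forall x eps, eps > 0 -> exists delta, delta > 0 /\
    forall h, hnorm h < delta ->
      Rabs (f (hadd H x h) - f x - hinner H (g x) h) <= eps * hnorm h.

Definition bounded_linear (G : H -> H) : Prop :=
  (forall x y, G (hadd H x y) = hadd H (G x) (G y)) /\
  (forall c x, G (hscal H c x) = hscal H c (G x)) /\
  (exists C, forall x, hnorm (G x) <= C * hnorm x).

Definition symmetric_op (G : H -> H) : Prop :=
  forall x y, hinner H (G x) y = hinner H x (G y).

Definition positive_definite_op (G : H -> H) : Prop :=
  forall x, x <> hzero H -> hinner H (G x) x > 0.

(** orthogonal projection onto span{e_1,...,e_n} (paper's 1-based indexing),
    i.e. onto span{e 0, ..., e (n-1)} *)
Definition proj_low (e : nat -> H) (n : nat) (x : H) : H :=
  hsumN (fun k => hscal H (hinner H x (e k)) (e k)) n.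
Definition proj_high (e : nat -> H) (n : nat) (x : H) : H :=
  hsub x (proj_low e n x).

Definition norm_alpha (e : nat -> H) (n : nat) (alpha : R) (x : H) : R :=
  hnorm (proj_low e n x) + alpha * hnorm (proj_high e n x).

End Ops.

Definition indic (P : Prop) : R :=
  if excluded_middle_informative P then 1 else 0.

(* Main.v *)
Require Import Defs.
From Stdlib Require Import Reals Lra Lia Classical ClassicalEpsilon.
Open Scope R_scope.

Fixpoint rsum (f : nat -> R) (N : nat) : R :=
  match N with O => 0 | S N' => rsum f N' + f N' end.

Lemma rsum_ext f g N : (forall k, (k < N)%nat -> f k = g k) -> rsum f N = rsum g N.
Proof. induction N; simpl; intros Hf; auto. rewrite IHN by (intros; apply Hf; lia). rewrite Hf by lia. auto. Qed.

Lemma rsum_le f g N : (forall k, (k < N)%nat -> f k <= g k) -> rsum f N <= rsum g N.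
Proof. induction N; simpl; intros Hf; [lra|]. assert (rsum f N <= rsum g N) by (apply IHN; intros; apply Hf; lia). assert (f N <= g N) by (apply Hf; lia). lra. Qed.

Lemma rsum_scal c f N : rsum (fun k => c * f k) N = c * rsum f N.
Proof. induction N; simpl; [ring|]. rewrite IHN; ring. Qed.

Lemma rsum_delta (c : nat -> R) N j :
  rsum (fun k => c k * (if Nat.eq_dec k j then 1 else 0)) N = if Nat.ltb j N then c j else 0.
Proof.
  induction N; simpl; auto. rewrite IHN.
  destruct (Nat.eq_dec N j) as [->|Hne].
  - assert (Nat.ltb j j = false) as E by (apply Nat.ltb_ge; lia). rewrite E.
    assert (Nat.ltb j (S j) = true) as E2 by (apply Nat.ltb_lt; lia). rewrite E2. ring.
  - destruct (Nat.ltb j N) eqn:E.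
    + apply Nat.ltb_lt in E. assert (Nat.ltb j (S N) = true) as E2 by (apply Nat.ltb_lt; lia). rewrite E2; ring.
    + apply Nat.ltb_ge in E. assert (Nat.ltb j (S N) = false) as E2 by (apply Nat.ltb_ge; lia). rewrite E2; ring.
Qed.

Lemma rsum_nonneg f N : (forall k, 0 <= f k) -> 0 <= rsum f N.
Proof. intros. induction N; simpl; [lra|]. specialize (H N); lra. Qed.


Lemma ip_add_r (H : HilbertSpace) x y z : hinner H x (hadd H y z) = hinner H x y + hinner H x z.
Proof. rewrite hinner_sym, hinner_add, (hinner_sym H y), (hinner_sym H z); auto. Qed.
Lemma ip_scal_r (H : HilbertSpace) a x y : hinner H x (hscal H a y) = a * hinner H x y.
Proof. rewrite hinner_sym, hinner_scal, hinner_sym; auto. Qed.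
Lemma ip_zero_l (H : HilbertSpace) w : hinner H (hzero H) w = 0.
Proof. pose proof (hinner_add H (hzero H) (hzero H) w) as E. rewrite hadd_zero in E. lra. Qed.
Lemma ip_zero_r (H : HilbertSpace) w : hinner H w (hzero H) = 0.
Proof. rewrite hinner_sym; apply ip_zero_l. Qed.
Lemma ip_sum_l (H : HilbertSpace) f N w : hinner H (hsumN H f N) w = rsum (fun k => hinner H (f k) w) N.
Proof. induction N; simpl; [apply ip_zero_l|]. rewrite hinner_add, IHN; auto. Qed.
Lemma ip_sum_r (H : HilbertSpace) f N w : hinner H w (hsumN H f N) = rsum (fun k => hinner H w (f k)) N.
Proof. rewrite hinner_sym, ip_sum_l. apply rsum_ext; intros; apply hinner_sym. Qed.

Ltac ipsimp := unfold hsub; repeat progress (rewrite ?hinner_add, ?ip_add_r, ?hinner_scal, ?ip_scal_r, ?ip_zero_l, ?ip_zero_r).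

Lemma scal0 (H : HilbertSpace) v : hscal H 0 v = hzero H.
Proof. replace 0 with (1 + -1) by ring. rewrite hscal_distr_r, hscal_one. apply hadd_opp. Qed.

Lemma ext (H : HilbertSpace) u v : (forall w, hinner H u w = hinner H v w) -> u = v.
Proof.
  intros Hw. assert (hsub H u v = hzero H) as Hd.
  { apply hinner_def. unfold hsub at 1. rewrite hinner_add, hinner_scal, !Hw. ring. }
  unfold hsub in Hd.
  assert (E: hadd H (hadd H u (hscal H (-1) v)) v = u).
  { rewrite <- hadd_assoc. pattern v at 2. rewrite <- (hscal_one H v). rewrite <- hscal_distr_r.
    replace (-1 + 1) with 0 by ring. rewrite scal0, hadd_comm, hadd_zero. auto. }
  rewrite Hd, hadd_zero in E. auto.
Qed.

Lemma norm_sq (H : HilbertSpace) x : hnorm H x * hnorm H x = hinner H x x.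
Proof. unfold hnorm. apply sqrt_sqrt, hinner_pos. Qed.
Lemma norm_nonneg (H : HilbertSpace) x : 0 <= hnorm H x.
Proof. apply sqrt_pos. Qed.

Lemma norm_le (H : HilbertSpace) u B : 0 <= B -> hinner H u u <= B * B -> hnorm H u <= B.
Proof. intros HB Hu. unfold hnorm. rewrite <- (sqrt_square B) by auto. apply sqrt_le_1; auto. apply hinner_pos. nra. Qed.
Lemma norm_ge (H : HilbertSpace) u B : 0 <= B -> B * B <= hinner H u u -> B <= hnorm H u.
Proof. intros HB Hu. unfold hnorm. rewrite <- (sqrt_square B) by auto. apply sqrt_le_1; nra. Qed.
Lemma norm_eq (H : HilbertSpace) u B : 0 <= B -> hinner H u u = B * B -> hnorm H u = B.
Proof. intros HB Hu. unfold hnorm. rewrite Hu. apply sqrt_square; auto. Qed.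

Lemma CS (H : HilbertSpace) x y : Rabs (hinner H x y) <= hnorm H x * hnorm H y.
Proof.
  assert (Hsq: hinner H x y * hinner H x y <= hinner H x x * hinner H y y).
  { destruct (Req_dec (hinner H y y) 0) as [E|E].
    - apply hinner_def in E. subst y. rewrite ip_zero_r, ip_zero_r. lra.
    - pose (t := - hinner H x y / hinner H y y).
      pose proof (hinner_pos H (hadd H x (hscal H t y))) as P. revert P; ipsimp; intro P.
      pose proof (hinner_pos H y). try rewrite (hinner_sym H y x) in P.
      assert (0 < hinner H y y) by lra.
      unfold t in P.
      set (X := hinner H x x) in *; set (Y := hinner H y y) in *; set (Z := hinner H x y) in *.
      assert (Q: 0 <= X - Z*Z/Y).
      { replace (X - Z*Z/Y) with (X + - Z / Y * Z + (- Z / Y * Z + - Z / Y * (- Z / Y * Y))) by (field; lra). auto. }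
      apply Rmult_le_compat_r with (r := Y) in Q; [|lra].
      replace ((X - Z*Z/Y)*Y) with (X*Y - Z*Z) in Q by (field; lra). lra. }
  rewrite <- (Rabs_pos_eq (hnorm H x * hnorm H y)) by (apply Rmult_le_pos; apply norm_nonneg).
  apply Rsqr_le_abs_0. unfold Rsqr. rewrite Rmult_assoc, (Rmult_comm (hnorm H y)), Rmult_assoc, norm_sq, <- Rmult_assoc, norm_sq. lra.
Qed.

Lemma Rabs_le_between x b : Rabs x <= b -> - b <= x <= b.
Proof. unfold Rabs; destruct (Rcase_abs x); lra. Qed.

Lemma norm_sub_le (H : HilbertSpace) a b : hnorm H (hsub H a b) <= hnorm H a + hnorm H b.
Proof.
  apply norm_le. pose proof (norm_nonneg H a); pose proof (norm_nonneg H b); lra.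
  ipsimp. rewrite (hinner_sym H b a).
  pose proof (CS H a b) as C. apply Rabs_le_between in C.
  pose proof (norm_sq H a); pose proof (norm_sq H b). nra.
Qed.

Lemma norm_tri (H : HilbertSpace) u v : hnorm H u <= hnorm H v + hnorm H (hsub H u v).
Proof.
  apply norm_le. pose proof (norm_nonneg H v); pose proof (norm_nonneg H (hsub H u v)); lra.
  pose proof (CS H v (hsub H u v)) as C. apply Rabs_le_between in C.
  pose proof (norm_sq H v); pose proof (norm_sq H (hsub H u v)).
  assert (E: hinner H u u = hinner H v v + 2 * hinner H v (hsub H u v) + hinner H (hsub H u v) (hsub H u v)).
  { ipsimp. rewrite (hinner_sym H u v). ring. }
  nra.
Qed.

Lemma norm_sub_comm (H : HilbertSpace) a b : hnorm H (hsub H a b) = hnorm H (hsub H b a).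
Proof. unfold hnorm. f_equal. ipsimp. rewrite (hinner_sym H b a). ring. Qed.

Lemma le_eps a b : (forall eps, eps > 0 -> a <= b + eps) -> a <= b.
Proof. intros Hh. destruct (Rle_dec a b); auto. specialize (Hh ((a - b)/2)). lra. Qed.

Lemma proj_coef (H : HilbertSpace) e n x j : orthonormal_basis H e ->
  hinner H (proj_low H e n x) (e j) = if Nat.ltb j n then hinner H x (e j) else 0.
Proof.
  intros [Ho _]. unfold proj_low. rewrite ip_sum_l.
  rewrite <- (rsum_delta (fun k => hinner H x (e k)) n j).
  apply rsum_ext; intros k _. rewrite hinner_scal, Ho. auto.
Qed.

Lemma proj_sq (H : HilbertSpace) e N u : orthonormal_basis H e ->
  hinner H (proj_low H e N u) (proj_low H e N u) = rsum (fun k => hinner H u (e k) * hinner H u (e k)) N.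
Proof.
  intros Ho. unfold proj_low at 1. rewrite ip_sum_l. apply rsum_ext; intros k Hk.
  rewrite hinner_scal, (hinner_sym H (e k)), proj_coef by auto.
  assert (Nat.ltb k N = true) as E by (apply Nat.ltb_lt; auto). rewrite E; auto.
Qed.

Lemma proj_cross (H : HilbertSpace) e N u : orthonormal_basis H e ->
  hinner H (proj_low H e N u) u = rsum (fun k => hinner H u (e k) * hinner H u (e k)) N.
Proof.
  intros Ho. unfold proj_low at 1. rewrite ip_sum_l. apply rsum_ext; intros k Hk.
  rewrite hinner_scal, (hinner_sym H (e k)). auto.
Qed.

Lemma bessel (H : HilbertSpace) e N u : orthonormal_basis H e ->
  rsum (fun k => hinner H u (e k) * hinner H u (e k)) N <= hinner H u u.
Proof.
  intros Ho. pose proof (hinner_pos H (hsub H u (proj_low H e N u))) as P.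
  revert P; ipsimp; intro P. rewrite (hinner_sym H u (proj_low H e N u)) in P.
  rewrite proj_sq, proj_cross in P by auto. lra.
Qed.

Lemma G_norm (H : HilbertSpace) e lam G v c : orthonormal_basis H e ->
  (forall k, G (e k) = hscal H (lam k) (e k)) -> symmetric_op H G -> 0 <= c ->
  (forall k, lam k * lam k * (hinner H v (e k) * hinner H v (e k)) <= c * c * (hinner H v (e k) * hinner H v (e k))) ->
  hnorm H (G v) <= c * hnorm H v.
Proof.
  intros Ho HG Hs Hc Hk.
  assert (HS: forall N, hnorm H (proj_low H e N (G v)) <= c * hnorm H v).
  { intros N. apply norm_le. pose proof (norm_nonneg H v); nra.
    rewrite proj_sq by auto.
    assert (Hc2: forall k, hinner H (G v) (e k) = lam k * hinner H v (e k)).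
    { intros k. rewrite Hs, HG, ip_scal_r. auto. }
    apply Rle_trans with (rsum (fun k => c * c * (hinner H v (e k) * hinner H v (e k))) N).
    { apply rsum_le; intros k _. rewrite Hc2. specialize (Hk k). nra. }
    rewrite rsum_scal. pose proof (bessel H e N v Ho). pose proof (norm_sq H v). nra. }
  apply le_eps; intros eps Heps.
  destruct Ho as [Ho1 Ho2]. destruct (Ho2 (G v) eps Heps) as [N HN].
  specialize (HN N (le_n N)).
  pose proof (norm_tri H (G v) (proj_low H e N (G v))) as T.
  rewrite norm_sub_comm in T. specialize (HS N). unfold proj_low in *. lra.
Qed.

Lemma norm_sub_zero (H : HilbertSpace) v : hnorm H (hsub H v (hzero H)) = hnorm H v.
Proof. unfold hnorm. f_equal. ipsimp. ring. Qed.

Lemma gm_bound (H : HilbertSpace) e (gm : H -> H) L Rcal p : orthonormal_basis H e -> 0 <= L -> Rcal > 0 ->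
  (forall x y, hnorm H (hsub H (gm x) (gm y)) <= L * hnorm H (hsub H x y)) ->
  (forall x, hnorm H x >= Rcal -> gm x = hzero H) -> hnorm H (gm p) <= L * Rcal.
Proof.
  intros Ho HL HR Lip Hz.
  assert (Hu: exists u, hinner H u u = 1 /\ 0 <= hinner H p u).
  { destruct Ho as [Ho _]. assert (E: hinner H (e 0%nat) (e 0%nat) = 1) by (rewrite Ho; destruct (Nat.eq_dec 0 0); lia || auto).
    destruct (Rle_dec 0 (hinner H p (e 0%nat))).
    - exists (e 0%nat); auto.
    - exists (hscal H (-1) (e 0%nat)). split. ipsimp. rewrite E; ring. rewrite ip_scal_r; lra. }
  destruct Hu as [u [Hu1 Hu2]].
  set (q := hadd H p (hscal H Rcal u)).
  assert (Hq: hnorm H q >= Rcal).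
  { apply Rle_ge, norm_ge; [lra|]. unfold q. ipsimp. rewrite (hinner_sym H u p), Hu1.
    pose proof (hinner_pos H p). nra. }
  specialize (Lip p q). rewrite (Hz q Hq), norm_sub_zero in Lip.
  assert (hnorm H (hsub H p q) = Rcal) as E.
  { apply norm_eq; [lra|]. unfold q. ipsimp. rewrite (hinner_sym H u p), Hu1. ring. }
  rewrite E in Lip. auto.
Qed.

Lemma grad_U (H : HilbertSpace) a (m : H -> R) gm U gU : frechet_gradient H m gm ->
  (forall x, U x = a / 2 * (hnorm H x) ^ 2 + m x) -> frechet_gradient H U gU -> a >= 0 ->
  forall p, gU p = hadd H (hscal H a p) (gm p).
Proof.
  intros Hm HU HgU Ha p.
  set (d := hsub H (gU p) (hadd H (hscal H a p) (gm p))).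
  assert (Hd: d = hzero H).
  { apply hinner_def. destruct (Req_dec (hinner H d d) 0) as [E|E]; auto. exfalso.
    pose proof (hinner_pos H d).
    set (D := hnorm H d).
    assert (HDD: D * D = hinner H d d) by apply norm_sq.
    assert (HD: 0 < D) by (pose proof (norm_nonneg H d); fold D in H1; destruct H1; auto; subst; nra).
    set (eps := D / 8).
    destruct (HgU p eps) as [d1 [Hd1 H1]]; [unfold eps; lra|].
    destruct (Hm p eps) as [d2 [Hd2 H2]]; [unfold eps; lra|].
    set (t := Rmin (Rmin d1 d2 / (2 * D)) (/ (2 * (a + 1)))).
    assert (Ht0: 0 < t).
    { unfold t. apply Rmin_glb_lt. apply Rdiv_lt_0_compat; [apply Rmin_glb_lt|]; lra.
      apply Rinv_0_lt_compat; lra. }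
    assert (Ht1: t <= Rmin d1 d2 / (2 * D)) by apply Rmin_l.
    assert (Ht2: t <= / (2 * (a + 1))) by apply Rmin_r.
    assert (Htd: t * D <= Rmin d1 d2 / 2).
    { apply Rmult_le_compat_r with (r := D) in Ht1; [|lra].
      replace (Rmin d1 d2 / (2 * D) * D) with (Rmin d1 d2 / 2) in Ht1 by (field; lra). auto. }
    pose proof (Rmin_l d1 d2); pose proof (Rmin_r d1 d2).
    set (h := hscal H t d).
    assert (Hh: hnorm H h = t * D).
    { apply norm_eq; [nra|]. unfold h. rewrite hinner_scal, ip_scal_r, <- HDD. ring. }
    specialize (H1 h). specialize (H2 h). rewrite Hh in H1, H2.
    assert (A1 := H1 ltac:(lra)). assert (A2 := H2 ltac:(lra)). clear H1 H2.
    apply Rabs_le_between in A1. apply Rabs_le_between in A2.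
    rewrite !HU in A1.
    assert (Hn2: forall x, hnorm H x ^ 2 = hinner H x x) by (intros; rewrite <- norm_sq; ring).
    rewrite !Hn2 in A1.
    assert (Eg: hinner H d d = hinner H (gU p) d - a * hinner H p d - hinner H (gm p) d).
    { unfold d at 1. unfold hsub. rewrite hinner_add, hinner_scal, hinner_add, hinner_scal. ring. }
    assert (Epp: hinner H (hadd H p h) (hadd H p h) = hinner H p p + 2 * t * hinner H p d + t * t * hinner H d d).
    { unfold h. rewrite !hinner_add, !ip_add_r, !hinner_scal, !ip_scal_r, (hinner_sym H d p). ring. }
    unfold h in A1, A2. rewrite !ip_scal_r in A1, A2. unfold h in Epp. rewrite Epp in A1.
    assert (K: t * (D * D) <= a / 2 * t * t * (D * D) + 2 * eps * (t * D)) by nra.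
    unfold eps in K.
    assert (K2: t * (D * D) * (3/4 - a * t / 2) <= 0) by nra.
    assert (K3: a * t <= 1/2).
    { apply Rmult_le_compat_l with (r := a) in Ht2; [|lra].
      assert (a * / (2 * (a + 1)) <= 1/2).
      { apply Rmult_le_reg_r with (2 * (a+1)); [lra|]. field_simplify; lra. }
      lra. }
    assert (0 < t * (D * D)) by (apply Rmult_lt_0_compat; nra).
    nra. }
  apply ext; intros w.
  assert (hinner H d w = 0) as E by (rewrite Hd; apply ip_zero_l).
  unfold d in E. revert E. unfold hsub. rewrite hinner_add, hinner_scal. lra.
Qed.

Lemma rsum_minus f g N : rsum (fun k => f k - g k) N = rsum f N - rsum g N.
Proof. induction N; simpl; [ring|]. rewrite IHN; ring. Qed.
Lemma rsum_plus f g N : rsum (fun k => f k + g k) N = rsum f N + rsum g N.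
Proof. induction N; simpl; [ring|]. rewrite IHN; ring. Qed.
Lemma rsum_zero f N : (forall k, (k < N)%nat -> f k = 0) -> rsum f N = 0.
Proof. intros Hf. induction N; simpl; auto. rewrite IHN. rewrite Hf by lia. ring. intros; apply Hf; lia. Qed.

Lemma norm_pos (H : HilbertSpace) v : v <> hzero H -> 0 < hnorm H v.
Proof.
  intros Hv. unfold hnorm. apply sqrt_lt_R0. pose proof (hinner_pos H v).
  destruct H0; auto. exfalso. apply Hv, hinner_def. auto.
Qed.

Lemma div_bound nl T K : 0 < nl -> T <= nl * K -> / nl * T <= K.
Proof.
  intros Hn HT. apply Rmult_le_reg_l with nl; auto. rewrite <- Rmult_assoc, Rinv_r by lra. lra.
Qed.

Theorem mainTheorem12
  (H : HilbertSpace) (e : nat -> H) (lam : nat -> R) (G : H -> H)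
  (a L : R) (m : H -> R) (gm : H -> H) (U : H -> R) (gU : H -> H)
  (n : nat) (Rcal : R) :
  (* orthonormal basis (hence H separable); e k, lam k stand for e_{k+1}, lambda_{k+1} *)
  orthonormal_basis H e ->
  (* G: trace-class, symmetric, positive definite, with G e_k = lambda_k e_k *)
  bounded_linear H G -> symmetric_op H G -> positive_definite_op H G ->
  (forall k, G (e k) = hscal H (lam k) (e k)) ->
  (forall k, lam k > 0) ->
  (forall k, lam (S k) <= lam k) ->
  Un_cv lam 0 ->
  lam 0%nat = 1 ->
  (exists s, infinite_sum lam s) ->
  (* potential *)
  a >= 0 -> L >= 1 ->
  (exists c, forall x, c <= m x) ->
  frechet_gradient H m gm ->
  (forall x y, hnorm H (hsub H (gm x) (gm y)) <= L * hnorm H (hsub H x y)) ->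
  (forall x, U x = a / 2 * (hnorm H x) ^ 2 + m x) ->
  frechet_gradient H U gU ->
  (* n = min { k >= 1 : lambda_{k+1} < 1/(2L) } *)
  (1 <= n)%nat -> lam n < / (2 * L) ->
  (forall k, (1 <= k)%nat -> (k < n)%nat -> lam k >= / (2 * L)) ->
  (* extra assumption *)
  Rcal > 0 ->
  (forall x, hnorm H x >= Rcal -> gm x = hzero H) ->
  let b := fun x => hscal H (-1) (G (gU x)) in
  let alpha := 2 * (1 + L) in
  let M := 3 / 4 in
  let Rr := 8 * L * Rcal in
  forall x y : H,
    norm_alpha H e n alpha (hsub H x y) >= Rr ->
    let dl := hsub H (proj_low H e n x) (proj_low H e n y) in
    let dh := hsub H (proj_high H e n x) (proj_high H e n y) in
    indic (proj_low H e n x <> proj_low H e n y)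
      * hinner H (hscal H (/ hnorm H dl) dl) (hsub H (b x) (b y))
    + indic (proj_high H e n x <> proj_high H e n y)
      * alpha * hinner H (hscal H (/ hnorm H dh) dh) (hsub H (b x) (b y))
    <= M * norm_alpha H e n alpha (hsub H x y).
Proof.
  intros Ho Hbl Hsym Hpd HG Hlam Hdec Hcv Hl0 Hsum Ha HL Hmb Hm Hlip HU HgU Hn1 Hln Hlk HR Hz
    b alpha M Rr x y Hxy dl dh.
  pose proof (grad_U H a m gm U gU Hm HU HgU Ha) as HgUe.
  assert (Hmono: forall i j, (i <= j)%nat -> lam j <= lam i).
  { intros i j Hij. induction Hij; [lra|]. specialize (Hdec m0). lra. }
  assert (Hle1: forall k, lam k <= 1) by (intros k; rewrite <- Hl0; apply Hmono; lia).
  assert (HG0: G (hzero H) = hzero H).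
  { destruct Hbl as [_ [Hs _]]. rewrite <- (scal0 H (hzero H)), Hs, !scal0. auto. }
  assert (Gpos: forall v, 0 <= hinner H (G v) v).
  { intros v. destruct (classic (v = hzero H)) as [->|Hv]. rewrite HG0, ip_zero_l; lra.
    specialize (Hpd v Hv). lra. }
  assert (Cl: forall k, (n <= k)%nat -> hinner H dl (e k) = 0).
  { intros k Hk. unfold dl. ipsimp. rewrite !proj_coef by auto.
    assert (Nat.ltb k n = false) as E by (apply Nat.ltb_ge; lia). rewrite E. ring. }
  assert (Ch: forall k, (k < n)%nat -> hinner H dh (e k) = 0).
  { intros k Hk. unfold dh, proj_high. ipsimp. rewrite !proj_coef by auto.
    assert (Nat.ltb k n = true) as E by (apply Nat.ltb_lt; lia). rewrite E. ring. }
  assert (Orth: hinner H dl (G dh) = 0).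
  { unfold dl, hsub at 1. rewrite hinner_add, hinner_scal. unfold proj_low. rewrite !ip_sum_l.
    rewrite (rsum_zero _ n), (rsum_zero _ n); [ring| |]; intros k Hk;
    rewrite hinner_scal, <- Hsym, HG, hinner_scal, (hinner_sym H (e k) dh), Ch by auto; ring. }
  assert (Split: forall v, hinner H v x - hinner H v y = hinner H v dl + hinner H v dh).
  { intros v. unfold dl, dh, proj_high. ipsimp. ring. }
  assert (Hb: forall v, hinner H v (hsub H (b x) (b y)) =
     - a * (hinner H (G v) x - hinner H (G v) y) - hinner H (G v) (hsub H (gm x) (gm y))).
  { intros v. unfold b. ipsimp. rewrite <- !Hsym, !HgUe. ipsimp. ring. }
  set (W := hnorm H (hsub H (gm x) (gm y))).
  assert (HW: W <= 2 * L * Rcal).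
  { unfold W. pose proof (norm_sub_le H (gm x) (gm y)).
    pose proof (gm_bound H e gm L Rcal x Ho ltac:(lra) HR Hlip Hz).
    pose proof (gm_bound H e gm L Rcal y Ho ltac:(lra) HR Hlip Hz). lra. }
  assert (HW0: 0 <= W) by apply norm_nonneg.
  assert (HCSw: forall v, - hinner H (G v) (hsub H (gm x) (gm y)) <= hnorm H (G v) * W).
  { intros v. pose proof (CS H (G v) (hsub H (gm x) (gm y))) as C. apply Rabs_le_between in C. unfold W. lra. }
  assert (Gdl: hnorm H (G dl) <= 1 * hnorm H dl).
  { apply (G_norm H e lam); auto; [lra|]. intros k. pose proof (Hlam k); pose proof (Hle1 k).
    pose proof (Rle_0_sqr (hinner H dl (e k))). unfold Rsqr in *.
    apply Rmult_le_compat_r; [auto|]. assert (0 < lam k) by auto. clear - H0 H1 H3. nra. }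
  assert (Gdh: hnorm H (G dh) <= lam n * hnorm H dh).
  { apply (G_norm H e lam); auto; [pose proof (Hlam n); lra|]. intros k.
    destruct (Nat.lt_ge_cases k n) as [Hk|Hk].
    - rewrite Ch by auto. lra.
    - pose proof (Hmono n k Hk) as P1. pose proof (Hlam k) as P2.
      pose proof (Rle_0_sqr (hinner H dh (e k))) as P3. unfold Rsqr in *.
      apply Rmult_le_compat_r; [auto|]. clear - P1 P2. nra. }
  assert (Edl: dl = proj_low H e n (hsub H x y)).
  { apply ext; intros w. unfold dl. unfold hsub at 1. rewrite hinner_add, hinner_scal.
    unfold proj_low. rewrite !ip_sum_l.
    rewrite <- (rsum_scal (-1)), <- rsum_plus.
    apply rsum_ext; intros k _. ipsimp. ring. }
  assert (Edh: dh = proj_high H e n (hsub H x y)).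
  { apply ext; intros w. unfold proj_high. rewrite <- Edl. unfold dh, dl, proj_high. ipsimp. ring. }
  unfold norm_alpha in *. rewrite <- Edl, <- Edh in *.
  set (nl := hnorm H dl) in *. set (nh := hnorm H dh) in *.
  assert (T1: indic (proj_low H e n x <> proj_low H e n y) * hinner H (hscal H (/ nl) dl) (hsub H (b x) (b y)) <= W).
  { unfold indic. destruct (excluded_middle_informative _) as [Hne|Heq]; [|lra].
    assert (Hnl: 0 < nl).
    { apply norm_pos. intros E0. apply Hne, ext. intros w.
      assert (hinner H dl w = 0) as E by (rewrite E0; apply ip_zero_l).
      unfold dl in E. revert E. unfold hsub. rewrite hinner_add, hinner_scal. lra. }
    rewrite Rmult_1_l, hinner_scal. apply div_bound; auto.
    rewrite Hb, Split. specialize (HCSw dl). pose proof (Gpos dl).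
    assert (hinner H (G dl) dh = 0) by (rewrite Hsym; auto).
    assert (0 <= a * (hinner H (G dl) dl + hinner H (G dl) dh)) by (apply Rmult_le_pos; lra).
    assert (hnorm H (G dl) * W <= nl * W) by (apply Rmult_le_compat_r; lra). lra. }
  assert (T2: indic (proj_high H e n x <> proj_high H e n y) * alpha * hinner H (hscal H (/ nh) dh) (hsub H (b x) (b y)) <= alpha * (lam n * W)).
  { unfold indic. destruct (excluded_middle_informative _) as [Hne|Heq].
    2:{ pose proof (Hlam n). unfold alpha. assert (0 <= lam n * W) by (apply Rmult_le_pos; lra). nra. }
    assert (Hnh: 0 < nh).
    { apply norm_pos. intros E0. apply Hne, ext. intros w.
      assert (hinner H dh w = 0) as E by (rewrite E0; apply ip_zero_l).
      unfold dh in E. revert E. unfold hsub at 1. rewrite hinner_add, hinner_scal. lra. }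
    rewrite Rmult_1_l, hinner_scal. apply Rmult_le_compat_l; [unfold alpha; lra|].
    apply div_bound; auto.
    rewrite Hb, Split. specialize (HCSw dh). pose proof (Gpos dh).
    assert (hinner H (G dh) dl = 0) by (rewrite hinner_sym; auto).
    assert (0 <= a * (hinner H (G dh) dl + hinner H (G dh) dh)) by (apply Rmult_le_pos; lra).
    assert (hnorm H (G dh) * W <= lam n * nh * W) by (apply Rmult_le_compat_r; lra). nra. }
  assert (Hal: alpha * lam n <= 2).
  { unfold alpha. pose proof (Hlam n).
    assert (lam n * (2 * L) < 1).
    { apply Rmult_lt_compat_r with (r := 2 * L) in Hln; [|lra]. rewrite Rinv_l in Hln by lra. auto. }
    nra. }
  unfold M, Rr in *. nra.
Qed.
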